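(* Let $R$ be a commutative ring and $\mathcal{A}=\{L_1,\dots,L_n\}$ an arrangement of affine lines in $\mathbb{C}^2$ with parallel class decomposition $\mathcal{A}=\mathcal{A}_1\sqcup\dots\sqcup\mathcal{A}_s$. Let $\mathcal{C}_s$ be an arrangement of $s$ distinct lines through the origin of $\mathbb{C}^2$, with Orlik–Solomon generators $\tilde e_1,\dots,\tilde e_s$. Then there exists an $R$-algebra homomorphism $\Delta_{tot}:A^*_R(\mathcal{A})\to A^*_R(\mathcal{C}_s)$ with $\Delta_{tot}(e_i)=\tilde e_\alpha$ whenever $L_i\in\mathcal{A}_\alpha$ ($1\le\alpha\le s$).
   Context: The parallel class decomposition is the partition of $\mathcal{A}$ into classes such that two lines are parallel (including equal direction) iff they lie in the same class $\mathcal{A}_\alpha$. The Orlik–Solomon algebra $A^*_R(\mathcal{A})$ of an arrangement $\mathcal{A}=\{L_1,\dots,L_n\}$ of affine lines in $\mathbb{C}^2$ over a commutative ring $R$ is the graded $R$-algebra with $A^0_R=R$, $A^1_R=\bigoplus_{i=1}^n R e_i$, $A^2_R=\bigwedge^2 A^1_R/I$ where $I$ is the $R$-submodule generated by (i) $e_i\wedge e_j$ for each pair of parallel lines $L_i\parallel L_j$ and (ii) $e_i\wedge e_j-e_i\wedge e_k+e_j\wedge e_k$ for each triple of lines with $L_i\cap L_j\cap L_k\neq\emptyset$, and $A^q_R=0$ for $q\ge3$; multiplication is the wedge product. *)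

(* Defs.v *)
From HB Require Import structures.
From mathcomp Require Import all_boot all_order all_algebra.
Set Implicit Arguments. Unset Strict Implicit. Unset Printing Implicit Defensive.
Import GRing.Theory Num.Theory.
Local Open Scope ring_scope.

Record line (K : fieldType) := Line {
  la : K; lb : K; lc : K;
  line_nondeg : (la, lb) != (0, 0) }.

Definition on_line (K : fieldType) (L : line K) (p : K * K) : Prop :=
  la L * p.1 + lb L * p.2 = lc L.

Definition same_line (K : fieldType) (L1 L2 : line K) : Prop :=
  forall p, on_line L1 p <-> on_line L2 p.

Definition parallel (K : fieldType) (L1 L2 : line K) : Prop :=
  la L1 * lb L2 = la L2 * lb L1.

Definition concurrent (K : fieldType) (L1 L2 L3 : line K) : Prop :=
  exists p, [/\ on_line L1 p, on_line L2 p & on_line L3 p].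

(** The truncated tensor algebra R (+) R^n (+) (R^n (x) R^n), in which
    degree 2 is represented by matrices: W = sum_{i,j} W i j  e_i (x) e_j.
    The Orlik--Solomon algebra is its quotient by [os_equiv] below
    (degree >= 3 is already truncated, A^q = 0 for q >= 3). *)
Record osElt (R : comPzRingType) (n : nat) := OsElt {
  os0 : R; os1 : 'rV[R]_n; os2 : 'M[R]_n }.

Section OSops.
Variables (R : comPzRingType) (n : nat).
Implicit Types (x y : osElt R n) (r : R).

Definition osadd x y : osElt R n :=
  OsElt (os0 x + os0 y) (os1 x + os1 y) (os2 x + os2 y).
Definition osscale r x : osElt R n :=
  OsElt (r * os0 x) (r *: os1 x) (r *: os2 x).
Definition osmul x y : osElt R n :=
  OsElt (os0 x * os0 y)
        (os0 x *: os1 y + os0 y *: os1 x)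
        (os0 x *: os2 y + os0 y *: os2 x + (os1 x)^T *m os1 y).
Definition osone : osElt R n := OsElt 1 0 0.
Definition osgen (i : 'I_n) : osElt R n := OsElt 0 (delta_mx ord0 i) 0.
End OSops.

(** Membership of a degree-2 tensor W in the R-submodule generated by
    - e_i(x)e_j + e_j(x)e_i and e_i(x)e_i   (exterior-power relations),
    - e_i(x)e_j for parallel L_i, L_j,
    - e_i e_j - e_i e_k + e_j e_k for concurrent L_i, L_j, L_k. *)
Definition os_rel (R : comPzRingType) (K : fieldType) (n : nat)
    (L : 'I_n -> line K) (W : 'M[R]_n) : Prop :=
  exists (a : 'I_n -> 'I_n -> R) (b : 'I_n -> R) (c : 'I_n -> 'I_n -> R)
         (d : 'I_n -> 'I_n -> 'I_n -> R),
    [/\ forall i j, ~ parallel (L i) (L j) -> c i j = 0,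
        forall i j k, ~ concurrent (L i) (L j) (L k) -> d i j k = 0 &
        W = \sum_i \sum_j a i j *: (delta_mx i j + delta_mx j i)
          + \sum_i b i *: delta_mx i i
          + \sum_i \sum_j c i j *: delta_mx i j
          + \sum_i \sum_j \sum_k d i j k *:
               (delta_mx i j - delta_mx i k + delta_mx j k)].
Arguments os_rel R {K n} L W.

Definition os_equiv (R : comPzRingType) (K : fieldType) (n : nat)
    (L : 'I_n -> line K) (x y : osElt R n) : Prop :=
  [/\ os0 x = os0 y, os1 x = os1 y & os_rel R L (os2 x - os2 y)].
Arguments os_equiv R {K n} L x y.

(** f (on representatives) induces an R-algebra homomorphism
    A^*_R(L) -> A^*_R(L'). *)
Definition os_hom (R : comPzRingType) (K : fieldType) (n m : nat)
    (L : 'I_n -> line K) (L' : 'I_m -> line K)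
    (f : osElt R n -> osElt R m) : Prop :=
  [/\ forall x y, os_equiv R L x y -> os_equiv R L' (f x) (f y),
      forall x y, os_equiv R L' (f (osadd x y)) (osadd (f x) (f y)),
      forall r x, os_equiv R L' (f (osscale r x)) (osscale r (f x)),
      forall x y, os_equiv R L' (f (osmul x y)) (osmul (f x) (f y)) &
      os_equiv R L' (f (osone R n)) (osone R m)].
Arguments os_hom R {K n m} L L' f.

(* Main.v *)
Require Import Defs.
From HB Require Import structures.
From mathcomp Require Import all_boot all_order all_algebra.
Import GRing.Theory Num.Theory.
Local Open Scope ring_scope.

Lemma add4ACA (V : zmodType) (a b c d a' b' c' d' : V) :
  (a + a') + (b + b') + (c + c') + (d + d') = (a + b + c + d) + (a' + b' + c' + d').
Proof. by rewrite [RHS]addrACA; congr (_ + _); rewrite [RHS]addrACA; congr (_ + _); rewrite [RHS]addrACA. Qed.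

Lemma sum_pick (R : pzRingType) (V : lmodType R) (m : nat) (F : 'I_m -> V) (a : 'I_m) :
  \sum_i ((i == a)%:R : R) *: F i = F a.
Proof.
rewrite (bigD1 a) //= eqxx scale1r big1 ?addr0 // => i /negbTE ->.
by rewrite scale0r.
Qed.

Section Rel.
Variables (R : comPzRingType) (K : fieldType) (n : nat) (L : 'I_n -> line K).

Lemma sum2_0 (F : 'I_n -> 'I_n -> 'M[R]_n) : \sum_i \sum_j (0 : R) *: F i j = 0.
Proof. by rewrite big1 // => i _; rewrite big1 // => j _; rewrite scale0r. Qed.
Lemma sum3_0 (F : 'I_n -> 'I_n -> 'I_n -> 'M[R]_n) :
  \sum_i \sum_j \sum_k (0 : R) *: F i j k = 0.
Proof. by rewrite big1 // => i _; rewrite sum2_0. Qed.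
Lemma sum1_0 (F : 'I_n -> 'M[R]_n) : \sum_i (0 : R) *: F i = 0.
Proof. by rewrite big1 // => i _; rewrite scale0r. Qed.

Lemma rel0 : os_rel R L 0.
Proof.
exists (fun _ _ => 0), (fun _ => 0), (fun _ _ => 0), (fun _ _ _ => 0); split => //.
by rewrite sum2_0 sum1_0 sum2_0 sum3_0 !addr0.
Qed.

Lemma relD W1 W2 : os_rel R L W1 -> os_rel R L W2 -> os_rel R L (W1 + W2).
Proof.
move=> [a [b [c [d [Hc Hd ->]]]]] [a' [b' [c' [d' [Hc' Hd' ->]]]]].
exists (fun i j => a i j + a' i j), (fun i => b i + b' i), (fun i j => c i j + c' i j),
  (fun i j k => d i j k + d' i j k); split.
- by move=> i j H; rewrite Hc // Hc' // addr0.
- by move=> i j k H; rewrite Hd // Hd' // addr0.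
have E1 : forall (F G : 'I_n -> 'I_n -> R) (M : 'I_n -> 'I_n -> 'M[R]_n),
  \sum_i \sum_j (F i j + G i j) *: M i j = \sum_i \sum_j F i j *: M i j + \sum_i \sum_j G i j *: M i j.
  move=> F G M; rewrite -big_split; apply: eq_bigr => i _; rewrite -big_split.
  by apply: eq_bigr => j _; rewrite scalerDl.
rewrite !E1.
have -> : \sum_i (b i + b' i) *: (delta_mx i i : 'M[R]_n) = \sum_i b i *: delta_mx i i + \sum_i b' i *: delta_mx i i.
  by rewrite -big_split; apply: eq_bigr => i _; rewrite scalerDl.
have -> : \sum_i \sum_j \sum_k (d i j k + d' i j k) *: (delta_mx i j - delta_mx i k + delta_mx j k : 'M[R]_n) =
   \sum_i \sum_j \sum_k d i j k *: (delta_mx i j - delta_mx i k + delta_mx j k) +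
   \sum_i \sum_j \sum_k d' i j k *: (delta_mx i j - delta_mx i k + delta_mx j k).
  rewrite -big_split; apply: eq_bigr => i _; rewrite -big_split.
  apply: eq_bigr => j _; rewrite -big_split; apply: eq_bigr => k _; by rewrite scalerDl.
by rewrite add4ACA.
Qed.

Lemma relZ r W : os_rel R L W -> os_rel R L (r *: W).
Proof.
move=> [a [b [c [d [Hc Hd ->]]]]].
exists (fun i j => r * a i j), (fun i => r * b i), (fun i j => r * c i j),
  (fun i j k => r * d i j k); split.
- by move=> i j H; rewrite Hc // mulr0.
- by move=> i j k H; rewrite Hd // mulr0.
rewrite !scalerDr !scaler_sumr; congr (_ + _ + _ + _); apply: eq_bigr => i _;
  rewrite ?scaler_sumr ?scalerA //; apply: eq_bigr => j _;
  rewrite ?scaler_sumr ?scalerA //; apply: eq_bigr => k _; by rewrite scalerA.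
Qed.

Lemma rel_sum (m : nat) (F : 'I_m -> 'M[R]_n) :
  (forall i, os_rel R L (F i)) -> os_rel R L (\sum_i F i).
Proof. by move=> H; apply: big_ind => //; [exact: rel0 | exact: relD]. Qed.

Lemma rel_b a : os_rel R L (delta_mx a a).
Proof.
exists (fun _ _ => 0), (fun i => (i == a)%:R), (fun _ _ => 0), (fun _ _ _ => 0); split => //.
by rewrite sum_pick sum2_0 sum2_0 sum3_0 !(addr0, add0r).
Qed.

Lemma rel_a a b : os_rel R L (delta_mx a b + delta_mx b a).
Proof.
exists (fun i j => (i == a)%:R * (j == b)%:R), (fun _ => 0), (fun _ _ => 0), (fun _ _ _ => 0);
  split => //.
rewrite sum1_0 sum2_0 sum3_0 !addr0.
rewrite (eq_bigr (fun i => (i == a)%:R *: \sum_j ((j == b)%:R : R) *: (delta_mx i j + delta_mx j i))).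
  by rewrite sum_pick sum_pick.
by move=> i _; rewrite scaler_sumr; apply: eq_bigr => j _; rewrite scalerA.
Qed.

Lemma rel_d a b c : concurrent (L a) (L b) (L c) ->
  os_rel R L (delta_mx a b - delta_mx a c + delta_mx b c).
Proof.
move=> Hcon.
exists (fun _ _ => 0), (fun _ => 0), (fun _ _ => 0),
  (fun i j k => (i == a)%:R * ((j == b)%:R * (k == c)%:R)); split => //.
  move=> i j k H; case: (eqVneq i a) => [Ei|]; last by move=> _; rewrite mul0r.
  case: (eqVneq j b) => [Ej|]; last by move=> _; rewrite mul0r mulr0.
  case: (eqVneq k c) => [Ek|]; last by move=> _; rewrite !mulr0.
  by exfalso; apply: H; rewrite Ei Ej Ek.
rewrite sum1_0 sum2_0 sum2_0 !add0r.
rewrite (eq_bigr (fun i => (i == a)%:R *: \sum_j ((j == b)%:R : R) *: \sum_k ((k == c)%:R : R) *: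
   (delta_mx i j - delta_mx i k + delta_mx j k))).
  by rewrite !sum_pick.
move=> i _; rewrite scaler_sumr; apply: eq_bigr => j _; rewrite scalerA scaler_sumr.
by apply: eq_bigr => k _; rewrite !scalerA mulrA.
Qed.

End Rel.

Section Map.
Variables (R : comPzRingType) (n s : nat) (cls : 'I_n -> 'I_s).

Definition Pm : 'M[R]_(n, s) := \sum_k delta_mx k (cls k).

Lemma delta_P (m : nat) (i : 'I_m) j : delta_mx i j *m Pm = delta_mx i (cls j).
Proof.
rewrite /Pm mulmx_sumr (bigD1 j) //= mul_delta_mx big1 ?addr0 // => k /negbTE nk.
by rewrite mul_delta_mx_cond eq_sym nk mulr0n.
Qed.

Definition phi (W : 'M[R]_n) : 'M[R]_s := Pm^T *m W *m Pm.

Lemma phi_delta i j : phi (delta_mx i j) = delta_mx (cls i) (cls j).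
Proof.
rewrite /phi -mulmxA delta_P -(trmxK (delta_mx i (cls j))) trmx_delta -trmx_mul.
by rewrite delta_P trmx_delta.
Qed.

Lemma phiD W1 W2 : phi (W1 + W2) = phi W1 + phi W2.
Proof. by rewrite /phi mulmxDr mulmxDl. Qed.
Lemma phiB W1 W2 : phi (W1 - W2) = phi W1 - phi W2.
Proof. by rewrite /phi mulmxBr mulmxBl. Qed.
Lemma phiZ r W : phi (r *: W) = r *: phi W.
Proof. by rewrite /phi -scalemxAr -scalemxAl. Qed.
Lemma phi_sum (m : nat) (F : 'I_m -> 'M[R]_n) : phi (\sum_i F i) = \sum_i phi (F i).
Proof. by rewrite /phi; move: Pm => P; rewrite mulmx_sumr mulmx_suml. Qed.

End Map.

Theorem theorem3p1 (R : comPzRingType) (K : numClosedFieldType) (n s : nat)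
  (L : 'I_n -> line K)
  (L_distinct : forall i j, same_line (L i) (L j) -> i = j)
  (cls : 'I_n -> 'I_s)
  (cls_surj : forall a : 'I_s, exists i, cls i = a)
  (cls_par : forall i j, parallel (L i) (L j) <-> cls i = cls j)
  (C : 'I_s -> line K)
  (C_origin : forall a, on_line (C a) (0, 0))
  (C_distinct : forall a b, same_line (C a) (C b) -> a = b) :
  exists f : osElt R n -> osElt R s,
    os_hom R L C f /\
    forall i, os_equiv R C (f (osgen R i)) (osgen R (cls i)).
Proof.
pose f (x : osElt R n) : osElt R s :=
  OsElt (os0 x) (os1 x *m @Pm R n s cls) (@phi R n s cls (os2 x)).
have refl : forall y, os_equiv R C y y.
  by move=> y; split => //; rewrite subrr; apply: rel0.
have transfer : forall W, os_rel R L W -> os_rel R C (@phi R n s cls W).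
  move=> W [a [b [c [d [Hc Hd ->]]]]].
  rewrite !phiD !phi_sum; apply: relD; [apply: relD; [apply: relD|]|].
  - apply: rel_sum => i; rewrite phi_sum; apply: rel_sum => j.
    by rewrite phiZ phiD !phi_delta; apply: relZ; apply: rel_a.
  - by apply: rel_sum => i; rewrite phiZ phi_delta; apply: relZ; apply: rel_b.
  - apply: rel_sum => i; rewrite phi_sum; apply: rel_sum => j.
    rewrite phiZ phi_delta.
    have [Hp|Hp] := eqVneq (la (L i) * lb (L j)) (la (L j) * lb (L i)).
      by have /cls_par -> : parallel (L i) (L j) by []; apply: relZ; apply: rel_b.
    by rewrite Hc ?scale0r; [apply: rel0 | move=> Hpar; move: Hp; rewrite Hpar eqxx].
  - apply: rel_sum => i; rewrite phi_sum; apply: rel_sum => j.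
    rewrite phi_sum; apply: rel_sum => k.
    rewrite phiZ phiD phiB !phi_delta; apply: relZ; apply: rel_d.
    by exists (0, 0); split; apply: C_origin.
have phi0 : @phi R n s cls 0 = 0 by rewrite /phi mulmx0 mul0mx.
exists f; split; last first.
  move=> i; have -> : f (osgen R i) = osgen R (cls i).
    by rewrite /f /osgen /= delta_P phi0.
  exact: refl.
split.
- move=> x y [E0 E1 E2]; split; rewrite /= ?E0 ?E1 // -phiB; exact: transfer.
- move=> x y; have -> : f (osadd x y) = osadd (f x) (f y).
    by rewrite /f /osadd /= mulmxDl phiD.
  exact: refl.
- move=> r x; have -> : f (osscale r x) = osscale r (f x).
    by rewrite /f /osscale /= -scalemxAl phiZ.
  exact: refl.
- move=> x y; have -> : f (osmul x y) = osmul (f x) (f y).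
    rewrite /f /osmul /= mulmxDl -!scalemxAl !phiD !phiZ.
    by congr (OsElt _ _ (_ + _ + _)); rewrite /phi trmx_mul !mulmxA.
  exact: refl.
- have -> : f (osone R n) = osone R s by rewrite /f /osone /= mul0mx phi0.
  exact: refl.
Qed.
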